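(* Let $k$ be an algebraically closed field, $n\ge1$, $1\le g\le n$, let $K$ be as in the context, let $\lambda\in k\setminus\{0\}$ and $m\in\mathbb N$. Let $R_m^\lambda$ be the full subcategory of $\operatorname{rep}K$ with objects $V_d^\lambda$, $1\le d\le m+2$. Let $Q_m^\lambda$ be the quiver with vertices $(\lambda,1),\dots,(\lambda,m+2)$ and arrows $\pi_\lambda(r):(\lambda,r+1)\to(\lambda,r)$ and $\rho_\lambda(r):(\lambda,r)\to(\lambda,r+1)$ for $r=1,\dots,m+1$. Let $F_\lambda:kQ_m^\lambda\to R_m^\lambda$ be the $k$-linear functor with $F_\lambda(\lambda,r)=V_r^\lambda$, where $F_\lambda\pi_\lambda(r):V_{r+1}^\lambda\to V_r^\lambda$ is given at every vertex of $K$ by the matrix $\begin{pmatrix}\mathbf 1_r & 0\end{pmatrix}\in k^{r\times(r+1)}$ and $F_\lambda\rho_\lambda(r):V_r^\lambda\to V_{r+1}^\lambda$ is given at every vertex by $\begin{pmatrix}0\\ \mathbf 1_r\end{pmatrix}\in k^{(r+1)\times r}$. Then $F_\lambda$ induces an isomorphism between the quotient of the path category $kQ_m^\lambda$ by the ideal generated by (1) $\pi_\lambda(r+1)\circ\rho_\lambda(r+1)=\rho_\lambda(r)\circ\pi_\lambda(r)$ for $r=1,\dots,m$, and (2) $\pi_\lambda(1)\circ\rho_\lambda(1)=0$, and the $k$-category $R_m^\lambda$.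
   Context: $K$: quiver with vertices $0,\dots,n$ and arrows $\beta_x:x\to x+1$ ($0\le x\le g-1$) and $\alpha_x:x+1\to x$ ($g\le x\le n$), indices modulo $n+1$; $\operatorname{rep}K$ is the category of finite-dimensional representations. For $d\ge1$, $V_d^\lambda$ is the representation with $V_d^\lambda(x)=k^d$ at every vertex, $V_d^\lambda(\beta_{g-1})=\lambda\,\mathrm{id}_d+J_d$, and $V_d^\lambda(\gamma)=\mathrm{id}_d$ for every other arrow $\gamma$, where $J_d$ is the $d\times d$ matrix with entries $1$ directly below the diagonal and $0$ elsewhere. $\mathbf 1_r$ is the $r\times r$ identity matrix. Composition $\circ$ is written right to left (apply the right factor first). *)

(* Defs.v *)
From HB Require Import structures.
From mathcomp Require Import all_boot all_order all_algebra.
Set Implicit Arguments. Unset Strict Implicit. Unset Printing Implicit Defensive.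
Import GRing.Theory.
Local Open Scope ring_scope.

(* ---------- The quiver K ----------
   Vertices 0..n are 'I_n.+1.  There is one arrow for each x : 'I_n.+1:
   for x < g it is beta_x : x -> x+1, for x >= g it is alpha_x : x+1 -> x
   (indices mod n+1, x+1 computed by ordS). *)
Definition Ksrc (n g : nat) (x : 'I_n.+1) : 'I_n.+1 :=
  if (x < g)%N then x else ordS x.
Definition Ktgt (n g : nat) (x : 'I_n.+1) : 'I_n.+1 :=
  if (x < g)%N then ordS x else x.

(* finite-dimensional representations of K: a dimension at each vertex and a
   matrix for each arrow; matrices act on column vectors, so a linear map
   k^p -> k^q is a q x p matrix and composition g o f is  g *m f. *)
Record qrep (k : fieldType) (n g : nat) := QRep {
  qdim : 'I_n.+1 -> nat;
  qmat : forall x : 'I_n.+1, 'M[k]_(qdim (Ktgt g x), qdim (Ksrc g x)) }.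

Definition is_rep_hom (k : fieldType) (n g : nat) (V W : qrep k n g)
  (f : forall x : 'I_n.+1, 'M[k]_(qdim W x, qdim V x)) : Prop :=
  forall x : 'I_n.+1, f (Ktgt g x) *m qmat V x = qmat W x *m f (Ksrc g x).

Definition Jnil (k : fieldType) (d : nat) : 'M[k]_d :=
  \matrix_(i, j) ((i : nat) == j.+1)%:R.

(* V_d^lam : k^d everywhere, lam 1 + J_d on beta_{g-1}, identity elsewhere *)
Definition Vrep (k : fieldType) (n g : nat) (lam : k) (d : nat) : qrep k n g :=
  @QRep k n g (fun _ => d)
    (fun x => if (val x == g.-1)%N then lam%:M + Jnil k d else 1%:M).

(* ---------- The quiver Q_m^lam and its path category ----------
   Vertex (lam, r) is represented by r : nat (1 <= r <= m+2).  Between r and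
   r+1 there are exactly the two arrows rho(r) : r -> r+1 and
   pi(r) : r+1 -> r, so a path starting at a is a word w : seq bool listing
   its arrows in the order they are traversed: true = go up (rho),
   false = go down (pi). *)
Definition qstep (a : nat) (b : bool) : nat := if b then a.+1 else a.-1.
Fixpoint qend (a : nat) (w : seq bool) : nat :=
  if w is b :: w' then qend (qstep a b) w' else a.
Fixpoint qvalid (m a : nat) (w : seq bool) : bool :=
  (1 <= a <= m.+2)%N &&
  match w with
  | [::] => true
  | b :: w' => (if b then (a <= m.+1)%N else (2 <= a)%N) && qvalid m (qstep a b) w'
  end.
Definition qpath (m a b : nat) (w : seq bool) : bool := qvalid m a w && (qend a w == b).

(* F pi(r) = (1_r 0) : k^{r+1} -> k^r   (here a = r+1) *)
Definition piM (k : fieldType) (a : nat) : 'M[k]_(a.-1, a) :=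
  \matrix_(i, j) ((i : nat) == j)%:R.
(* F rho(r) = (0 ; 1_r) : k^r -> k^{r+1}   (here a = r) *)
Definition rhoM (k : fieldType) (a : nat) : 'M[k]_(a.+1, a) :=
  \matrix_(i, j) ((i : nat) == j.+1)%:R.
Definition stepM (k : fieldType) (a : nat) (b : bool) : 'M[k]_(qstep a b, a) :=
  if b as b' return 'M[k]_(qstep a b', a) then rhoM k a else piM k a.
Fixpoint Fword (k : fieldType) (a : nat) (w : seq bool) : 'M[k]_(qend a w, a) :=
  match w return 'M[k]_(qend a w, a) with
  | [::] => 1%:M
  | b :: w' => Fword k (qstep a b) w' *m stepM k a b
  end.
Definition FQ (k : fieldType) (a b : nat) (w : seq bool) : 'M[k]_(b, a) :=
  conform_mx 0 (Fword k a w).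

(* Morphisms of kQ_m^lam from (lam,a) to (lam,b): formal k-linear
   combinations of paths, represented by finite lists of (coefficient, path);
   two lists denote the same morphism iff they have the same coefficients. *)
Definition kQelt (k : fieldType) (m a b : nat) (x : seq (k * seq bool)) : bool :=
  all (fun c => qpath m a b c.2) x.
Definition qcoef (k : fieldType) (x : seq (k * seq bool)) (w : seq bool) : k :=
  \sum_(c <- x | c.2 == w) c.1.
(* F_lam on a morphism (its common matrix at every vertex of K) *)
Definition Fform (k : fieldType) (a b : nat) (x : seq (k * seq bool)) : 'M[k]_(b, a) :=
  \sum_(c <- x) c.1 *: FQ k a b c.2.

(* The relations: Some r (1 <= r <= m) is relation (1) at vertex r+1:
   pi(r+1) o rho(r+1) - rho(r) o pi(r);  None is relation (2) at vertex 1: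
   pi(1) o rho(1). *)
Definition rel_ok (m : nat) (i : option nat) : bool :=
  if i is Some r then (1 <= r <= m)%N else true.
Definition relv (i : option nat) : nat := if i is Some r then r.+1 else 1%N.
Definition rel_elem (k : fieldType) (i : option nat) : seq (k * seq bool) :=
  if i is Some _ then [:: (1, [:: true; false]); (-1, [:: false; true])]
  else [:: (1, [:: true; false])].

(* expansion of  sum t * (p o rel_i o q)  with q : a -> relv i, p : relv i -> b *)
Definition ideal_expand (k : fieldType) (y : seq (k * seq bool * option nat * seq bool))
  : seq (k * seq bool) :=
  flatten [seq (let: (t, q, i, p) := u in
                [seq (t * s.1, q ++ s.2 ++ p) | s <- rel_elem k i]) | u <- y].

Definition in_ideal (k : fieldType) (m a b : nat) (x : seq (k * seq bool)) : Prop :=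
  exists y : seq (k * seq bool * option nat * seq bool),
    all (fun u => let: (t, q, i, p) := u in
           [&& rel_ok m i, qpath m a (relv i) q & qpath m (relv i) b p]) y /\
    forall w, qcoef x w = qcoef (ideal_expand y) w.

Arguments is_rep_hom {k n g} V W f.
Arguments kQelt {k} m a b x.
Arguments Fform {k} a b x.
Arguments in_ideal {k} m a b x.

(* Main.v *)
Require Import Defs.
From HB Require Import structures.
From mathcomp Require Import all_boot all_order all_algebra.
From mathcomp Require Import zify ring.
Import GRing.Theory.
Set Implicit Arguments. Unset Strict Implicit.
Local Open Scope ring_scope.

Definition ups (w : seq bool) := count id w.
Definition downs (w : seq bool) := count negb w.

Lemma qend_cat a w1 w2 : qend a (w1 ++ w2) = qend (qend a w1) w2.
Proof. by elim: w1 a => //= s w1 IH a. Qed.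

Lemma qvalid_bound {m a w} : qvalid m a w -> (1 <= a <= m.+2)%N.
Proof. by case: w => [|s w] /= /andP[]. Qed.

Lemma qvalid_cat m a w1 w2 :
  qvalid m a (w1 ++ w2) = qvalid m a w1 && qvalid m (qend a w1) w2.
Proof.
elim: w1 a => [|s w1 IH] a /=.
  by case H: (qvalid m a w2); [rewrite (qvalid_bound H)|rewrite andbF].
by rewrite IH !andbA.
Qed.

Lemma ups_cons s w : ups (s :: w) = (s + ups w)%N.
Proof. by []. Qed.
Lemma downs_cons s w : downs (s :: w) = (~~ s + downs w)%N.
Proof. by []. Qed.

Lemma qend_le a w : (qend a w <= a + ups w)%N.
Proof.
rewrite /ups; elim: w a => [|s w IH] a /=; first by rewrite addn0.
case: s => /=; [have := IH a.+1 | have := IH a.-1]; lia.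
Qed.

Lemma qend_eq m a w : qvalid m a w -> (qend a w + downs w = a + ups w)%N.
Proof.
rewrite /ups /downs; elim: w a => [|s w IH] a /=; first by rewrite !addn0.
case: s => /= /andP[/andP[h1 h2] /andP[h3 /IH]]; lia.
Qed.

Lemma qpath_cat {m a v c q r} : qpath m a v q -> qpath m v c r -> qpath m a c (q ++ r).
Proof.
rewrite /qpath qvalid_cat qend_cat => /andP[-> /eqP ->] /andP[-> ->]; by [].
Qed.

Lemma qvalid_upT m L U : (1 <= L)%N -> (L + U <= m.+2)%N -> qvalid m L (nseq U true).
Proof.
elim: U L => [|U IH] L h1 h2 /=.
  by apply/andP; split=> //; apply/andP; split; lia.
apply/andP; split; first (apply/andP; split; lia).
apply/andP; split; first lia.
apply: IH; lia.
Qed.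

Lemma qend_upT L U : qend L (nseq U true) = (L + U)%N.
Proof. by elim: U L => [|U IH] L /=; rewrite ?addn0 // IH addSnnS. Qed.

Lemma qvalid_downF m L D : (D < L)%N -> (L <= m.+2)%N -> qvalid m L (nseq D false).
Proof.
elim: D L => [|D IH] L h1 h2 /=.
  by apply/andP; split=> //; apply/andP; split; lia.
apply/andP; split; first (apply/andP; split; lia).
apply/andP; split; first lia.
apply: IH; lia.
Qed.

Lemma qend_downF L D : qend L (nseq D false) = (L - D)%N.
Proof. elim: D L => [|D IH] L /=; rewrite ?subn0 // IH; lia. Qed.

Lemma nseq_rcons' (T : Type) (x : T) n : nseq n x ++ [:: x] = nseq n.+1 x.
Proof. by elim: n => //= n ->. Qed.

Section Ideal.
Variable k : fieldType.
Implicit Types x : seq (k * seq bool).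

Lemma qcoef_nil w : qcoef ([::] : seq (k * seq bool)) w = 0.
Proof. by rewrite /qcoef big_nil. Qed.

Lemma qcoef_cons (c : k * seq bool) x w :
  qcoef (c :: x) w = (if c.2 == w then c.1 else 0) + qcoef x w.
Proof. by rewrite /qcoef big_cons; case: ifP => _ //; rewrite add0r. Qed.

Lemma qcoef_cat x1 x2 w : qcoef (x1 ++ x2) w = qcoef x1 w + qcoef x2 w.
Proof. by rewrite /qcoef big_cat. Qed.

Lemma sum_qcoef x (G : seq bool -> k) (S : seq (seq bool)) :
  uniq S -> {subset [seq c.2 | c <- x] <= S} ->
  \sum_(c <- x) c.1 * G c.2 = \sum_(w <- S) qcoef x w * G w.
Proof.
move=> uS; elim: x => [|c x IH] sub.
  by rewrite big_nil big1 // => w _; rewrite qcoef_nil mul0r.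
rewrite big_cons IH; last by move=> w hw; apply: sub; rewrite inE hw orbT.
rewrite [RHS](eq_bigr (fun w => (if c.2 == w then c.1 else 0) * G w + qcoef x w * G w));
  last by move=> w _; rewrite qcoef_cons mulrDl.
rewrite big_split /=; congr (_ + _).
have cS : c.2 \in S by apply: sub; rewrite inE eqxx.
rewrite (bigD1_seq c.2) //= eqxx big1 ?addr0 // => w /negPf ne.
by rewrite eq_sym ne mul0r.
Qed.

Lemma sumq_eq x x' (G : seq bool -> k) : (forall w, qcoef x w = qcoef x' w) ->
  \sum_(c <- x) c.1 * G c.2 = \sum_(c <- x') c.1 * G c.2.
Proof.
move=> E; set S := undup ([seq c.2 | c <- x] ++ [seq c.2 | c <- x']).
have uS : uniq S by apply: undup_uniq.
rewrite (@sum_qcoef x G S uS); last by move=> w hw; rewrite mem_undup mem_cat hw.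
rewrite (@sum_qcoef x' G S uS); last by move=> w hw; rewrite mem_undup mem_cat hw orbT.
by apply: eq_bigr => w _; rewrite E.
Qed.

Lemma qcoef_map x (H : seq bool -> seq bool) w :
  qcoef [seq (c.1, H c.2) | c <- x] w = \sum_(c <- x) c.1 * (H c.2 == w)%:R.
Proof.
rewrite /qcoef big_map big_mkcond /=; apply: eq_bigr => c _.
by case: ifP; rewrite ?mulr1 ?mulr0.
Qed.

Lemma qcoef_map_eq x x' (H : seq bool -> seq bool) :
  (forall w, qcoef x w = qcoef x' w) ->
  forall w, qcoef [seq (c.1, H c.2) | c <- x] w = qcoef [seq (c.1, H c.2) | c <- x'] w.
Proof. by move=> E w; rewrite !qcoef_map; exact: (sumq_eq (fun w0 => (H w0 == w)%:R) E). Qed.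

Lemma ideal_expand_cat (y1 y2 : seq (k * seq bool * option nat * seq bool)) :
  ideal_expand (y1 ++ y2) = ideal_expand y1 ++ ideal_expand y2.
Proof. by rewrite /ideal_expand map_cat flatten_cat. Qed.

Lemma ideal_expand_cons t q i p (y : seq (k * seq bool * option nat * seq bool)) :
  ideal_expand ((t, q, i, p) :: y) =
  [seq (t * s.1, q ++ s.2 ++ p) | s <- rel_elem k i] ++ ideal_expand y.
Proof. by []. Qed.

Variable m : nat.

Lemma ideal_ext a b x x' : (forall w, qcoef x w = qcoef x' w) ->
  in_ideal m a b x -> in_ideal m a b x'.
Proof. by move=> E [y [Hy Hc]]; exists y; split=> // w; rewrite -E. Qed.

Lemma ideal_nil a b : in_ideal m a b ([::] : seq (k * seq bool)).
Proof. by exists [::]; split=> // w. Qed.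

Lemma ideal_cat a b x1 x2 : in_ideal m a b x1 -> in_ideal m a b x2 ->
  in_ideal m a b (x1 ++ x2).
Proof.
move=> [y1 [H1 C1]] [y2 [H2 C2]]; exists (y1 ++ y2); split.
  by rewrite all_cat H1 H2.
by move=> w; rewrite ideal_expand_cat !qcoef_cat C1 C2.
Qed.

Lemma ideal_scale a b t x : in_ideal m a b x ->
  in_ideal m a b [seq (t * c.1, c.2) | c <- x].
Proof.
move=> [y [Hy C]].
exists [seq (let: (t0, q, i, p) := u in (t * t0, q, i, p)) | u <- y]; split.
  rewrite all_map; apply: sub_all Hy => -[[[t0 q] i] p] //.
have qs : forall x0 w, qcoef [seq (t * c.1, c.2) | c <- x0] w = t * qcoef x0 w.
  by move=> x0 w; rewrite /qcoef big_map big_distrr.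
move=> w; rewrite qs C; elim: y {Hy C} => [|[[[t0 q] i] p] y IH].
  by rewrite /ideal_expand /= qcoef_nil mulr0.
rewrite map_cons !ideal_expand_cons !qcoef_cat -IH mulrDr; congr (_ + _).
case: i => [r|] /=; rewrite !qcoef_cons !qcoef_nil;
  by repeat case: ifP => _; rewrite /=; ring.
Qed.

Lemma ideal_cong a v v' b q p x : in_ideal m v v' x -> qpath m a v q -> qpath m v' b p ->
  in_ideal m a b [seq (c.1, q ++ c.2 ++ p) | c <- x].
Proof.
move=> [y [Hy C]] hq hp.
exists [seq (let: (t, q0, i, p0) := u in (t, q ++ q0, i, p0 ++ p)) | u <- y]; split.
  rewrite all_map; apply: sub_all Hy => -[[[t0 q0] i] p0] /= /and3P[h1 h2 h3].
  by rewrite h1 (qpath_cat hq h2) (qpath_cat h3 hp).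
have -> : ideal_expand [seq (let: (t, q0, i, p0) := u in (t, q ++ q0, i, p0 ++ p)) | u <- y]
  = [seq (c.1, q ++ c.2 ++ p) | c <- ideal_expand y].
  elim: y {Hy C} => [|[[[t0 q0] i] p0] y IH] //.
  rewrite map_cons !ideal_expand_cons IH map_cat; congr (_ ++ _).
  by case: i => [r|] /=; rewrite -!catA.
exact: (qcoef_map_eq (fun w => q ++ w ++ p) C).
Qed.

End Ideal.

Section NF.
Variable k : fieldType.
Variable m : nat.

Definition eqv a b (w1 w2 : seq bool) := @in_ideal k m a b [:: (1, w1); (-1, w2)].
Definition zro a b (w : seq bool) := @in_ideal k m a b [:: (1, w)].

Lemma eqv_refl a b w : eqv a b w w.
Proof.
apply: (@ideal_ext k m a b [::]); last exact: ideal_nil.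
move=> w0.
by rewrite !qcoef_cons !qcoef_nil; case: ifP => _; rewrite ?addr0 ?subrr.
Qed.

Lemma eqv_trans a b w1 w2 w3 : eqv a b w1 w2 -> eqv a b w2 w3 -> eqv a b w1 w3.
Proof.
move=> h1 h2; apply: (@ideal_ext k m a b _ _ _ (ideal_cat h1 h2)) => w0 /=.
rewrite !qcoef_cons !qcoef_nil.
by case: (w1 == w0); case: (w2 == w0); case: (w3 == w0); rewrite /=; ring.
Qed.

Lemma eqv_zro a b w1 w2 : eqv a b w1 w2 -> zro a b w2 -> zro a b w1.
Proof.
move=> h1 h2; apply: (@ideal_ext k m a b _ _ _ (ideal_cat h1 h2)) => w0 /=.
rewrite !qcoef_cons !qcoef_nil.
by case: (w1 == w0); case: (w2 == w0); rewrite /=; ring.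
Qed.

Lemma eqv_cong a v v' b q p w1 w2 : eqv v v' w1 w2 -> qpath m a v q -> qpath m v' b p ->
  eqv a b (q ++ w1 ++ p) (q ++ w2 ++ p).
Proof. by move=> h hq hp; have := ideal_cong h hq hp. Qed.

Lemma zro_cong a v v' b q p w : zro v v' w -> qpath m a v q -> qpath m v' b p ->
  zro a b (q ++ w ++ p).
Proof. by move=> h hq hp; have := ideal_cong h hq hp. Qed.

Lemma qpath_nil a : (1 <= a <= m.+2)%N -> qpath m a a [::].
Proof. by move=> h; rewrite /qpath /= h eqxx. Qed.

Lemma relSome L b p : (2 <= L <= m.+1)%N -> qpath m L b p ->
  eqv L b [:: true, false & p] [:: false, true & p].
Proof.
move=> /andP[h1 h2] hp.
exists [:: (1, [::], Some L.-1, p)]; split.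
  rewrite /= andbT /rel_ok /relv prednK; last lia.
  rewrite hp qpath_nil ?andbT; last (apply/andP; split; lia).
  apply/andP; split; lia.
move=> w; rewrite /ideal_expand /= !qcoef_cons !qcoef_nil.
by rewrite !mul1r.
Qed.

Lemma relNone b p : qpath m 1 b p -> zro 1 b [:: true, false & p].
Proof.
move=> hp.
exists [:: (1, [::], None, p)]; split.
  by rewrite /= andbT /rel_ok /relv hp.
move=> w; rewrite /ideal_expand /= !qcoef_cons !qcoef_nil.
by rewrite !mul1r.
Qed.

Lemma bubble U L : (1 <= L)%N -> (L + U <= m.+2)%N -> (2 <= L + U)%N ->
  if (2 <= L)%N then eqv L (L + U).-1 (nseq U true ++ [:: false]) (false :: nseq U true)
  else zro L (L + U).-1 (nseq U true ++ [:: false]).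
Proof.
elim: U L => [|U IH] L h1 h2 h3.
  rewrite addn0 in h3 *; rewrite h3; exact: eqv_refl.
have := IH L.+1 ltac:(lia) ltac:(lia) ltac:(lia); rewrite ltnS h1 => e1.
have hT : qpath m L L.+1 [:: true].
  by rewrite /qpath /= eqxx !andbT; apply/andP; split; [apply/andP; split|]; lia.
have hn : (1 <= (L.+1 + U).-1 <= m.+2)%N by apply/andP; split; lia.
have e2 := eqv_cong e1 hT (qpath_nil hn).
have E : (L.+1 + U).-1 = (L + U)%N by lia.
rewrite !cats0 /= in e2.
have -> : (L + U.+1).-1 = (L + U)%N by lia.
have hp : qpath m L (L + U) (nseq U true).
  by rewrite /qpath qend_upT eqxx andbT qvalid_upT //; lia.
case: ifP => hL.
  apply: (eqv_trans e2).
  apply: relSome hp; apply/andP; split; lia.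
have L1 : L = 1%N by lia.
subst L.
apply: (eqv_zro e2).
exact: relNone hp.
Qed.

End NF.

Lemma downs_rcons w s : downs (w ++ [:: s]) = (downs w + ~~ s)%N.
Proof. by rewrite /downs count_cat /= addn0. Qed.
Lemma ups_rcons w s : ups (w ++ [:: s]) = (ups w + s)%N.
Proof. by rewrite /ups count_cat /= addn0. Qed.

Definition canon w := nseq (downs w) false ++ nseq (ups w) true.

Section NF2.
Variable k : fieldType.
Variable m : nat.

Lemma NF a w : qvalid m a w ->
  if (downs w < a)%N then eqv k m a (qend a w) w (canon w) else zro k m a (qend a w) w.
Proof.
elim/last_ind: w => [|w s IH].
  move=> h; have hb := qvalid_bound h.
  have -> : (downs [::] < a)%N by rewrite /downs /=; lia.
  exact: eqv_refl.
rewrite -cats1 qvalid_cat => /andP[hw hs].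
have IH' := IH hw.
have ha := qvalid_bound hw.
set v := qend a w in IH' hs *.
have hv := qend_eq hw; rewrite -/v in hv.
have hvb := qvalid_bound hs.
rewrite qend_cat -/v /canon downs_rcons ups_rcons.
case: s hs => hs /=.
  rewrite addn0 addn1.
  have hT : qpath m v v.+1 [:: true] by rewrite /qpath hs eqxx.
  case: ifP IH' => hD IH'.
    have := eqv_cong IH' (qpath_nil ha) hT.
    by rewrite /= /canon -catA nseq_rcons'.
  have := zro_cong IH' (qpath_nil ha) hT; by [].
rewrite addn0 addn1.
have hF : qpath m v v.-1 [:: false] by rewrite /qpath hs eqxx.
have v2 : (2 <= v)%N by move: hs => /= /andP[_ /andP[]].
case: (ltnP (downs w) a) IH' => hD IH'; last first.
  rewrite ifF; last lia.
  have := zro_cong IH' (qpath_nil ha) hF; by [].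
have e1 := eqv_cong IH' (qpath_nil ha) hF; rewrite /= /canon -catA in e1.
have hq : qpath m a (a - downs w) (nseq (downs w) false).
  by rewrite /qpath qend_downF eqxx andbT qvalid_downF //; lia.
have B := @bubble k m (ups w) (a - downs w) ltac:(lia) ltac:(lia) ltac:(lia).
have E : (a - downs w + ups w).-1 = v.-1 by lia.
have hn : (1 <= (a - downs w + ups w).-1 <= m.+2)%N by apply/andP; split; lia.
case: (ltnP (downs w).+1 a) => hD2.
  rewrite (ifT _ _ (_ : (2 <= a - downs w)%N)) in B; last lia.
  have e2 := eqv_cong B hq (qpath_nil hn).
  rewrite !cats0 E in e2.
  apply: (eqv_trans e1); rewrite -nseq_rcons' -catA; by rewrite /=.
rewrite ifF in B; last lia.
have e2 := zro_cong B hq (qpath_nil hn).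
rewrite !cats0 E in e2.
exact: eqv_zro e1 e2.
Qed.

End NF2.

Section Mat.
Variable k : fieldType.

Definition Mshift b a u : 'M[k]_(b, a) := \matrix_(i, j) ((i : nat) == j + u)%N%:R.

Lemma sum_delta n (G : 'I_n -> k) c (h : (c < n)%N) :
  \sum_(l < n) G l * ((l : nat) == c)%:R = G (Ordinal h).
Proof.
rewrite (bigD1 (Ordinal h)) //= eqxx mulr1 big1 ?addr0 // => l hl.
suff -> : ((l : nat) == c) = false by rewrite mulr0.
by apply/negbTE; apply: contra hl => /eqP e; apply/eqP; apply: val_inj.
Qed.

Lemma sum_delta0 n (G : 'I_n -> k) c : (n <= c)%N ->
  \sum_(l < n) G l * ((l : nat) == c)%:R = 0.
Proof.
move=> h; rewrite big1 // => l _.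
suff -> : ((l : nat) == c) = false by rewrite mulr0.
by apply/negbTE; apply/eqP => e; have := ltn_ord l; lia.
Qed.

Lemma Mshift_rho e a u : Mshift e a.+1 u *m rhoM k a = Mshift e a u.+1.
Proof.
apply/matrixP => i j; rewrite !mxE.
under eq_bigr do rewrite !mxE.
have h : (j.+1 < a.+1)%N by rewrite ltnS.
rewrite (sum_delta (fun l : 'I_a.+1 => ((i:nat) == (l + u)%N)%:R) h) /=.
by rewrite addSnnS.
Qed.

Lemma Mshift_pi e a u : (e <= a.-1 + u)%N -> Mshift e a.-1 u *m piM k a = Mshift e a u.
Proof.
move=> he; apply/matrixP => i j; rewrite !mxE.
under eq_bigr do rewrite !mxE.
case: (ltnP j a.-1) => hj.
  by rewrite (sum_delta (fun l : 'I_a.-1 => ((i:nat) == (l + u)%N)%:R) hj).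
rewrite (sum_delta0 (fun l : 'I_a.-1 => ((i:nat) == (l + u)%N)%:R)) //.
suff -> : ((i : nat) == (j + u)%N) = false by [].
by apply/negbTE/eqP => ee; have := ltn_ord i; lia.
Qed.

Lemma Fword_eq a w : Fword k a w = Mshift (qend a w) a (ups w).
Proof.
elim: w a => [|s w IH] a /=.
  apply/matrixP => i j; rewrite !mxE addn0.
  by case: (i =P j) => [->|ne]; rewrite ?eqxx //; case: eqP => // e; case: ne; apply: val_inj.
rewrite IH; case: s => /=.
  by rewrite Mshift_rho /ups /= add1n.
rewrite Mshift_pi //.
exact: qend_le.
Qed.

Lemma FQ_eq a b w : qend a w = b -> FQ k a b w = Mshift b a (ups w).
Proof.
move=> E; rewrite /FQ Fword_eq; case: b / E.
by rewrite conform_mx_id.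
Qed.

Lemma Mshift_J b a u : (b <= a + u)%N ->
  Mshift b a u *m Jnil k a = Jnil k b *m Mshift b a u.
Proof.
move=> hb; apply/matrixP => i j; rewrite !mxE.
under eq_bigr do rewrite !mxE.
under [RHS]eq_bigr do rewrite !mxE.
case: (ltnP j.+1 a) => hj.
  rewrite (sum_delta (fun l : 'I_a => ((i:nat) == (l + u)%N)%:R) hj) /=.
  case: (ltnP (j + u) b) => hju.
    by rewrite (sum_delta (fun l : 'I_b => ((i:nat) == l.+1)%:R) hju) /= addSn.
  rewrite (sum_delta0 (fun l : 'I_b => ((i:nat) == l.+1)%:R)) //.
  suff -> : ((i : nat) == (j.+1 + u)%N) = false by [].
  by apply/negbTE/eqP => ee; have := ltn_ord i; lia.
rewrite (sum_delta0 (fun l : 'I_a => ((i:nat) == (l + u)%N)%:R)) //.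
case: (ltnP (j + u) b) => hju.
  rewrite (sum_delta (fun l : 'I_b => ((i:nat) == l.+1)%:R) hju) /=.
  suff -> : ((i : nat) == (j + u).+1) = false by [].
  by apply/negbTE/eqP => ee; have := ltn_ord i; have := ltn_ord j; lia.
by rewrite (sum_delta0 (fun l : 'I_b => ((i:nat) == l.+1)%:R)).
Qed.

Lemma Mshift0 b a u : (b <= u)%N -> Mshift b a u = 0.
Proof.
move=> h; apply/matrixP => i j; rewrite !mxE.
suff -> : ((i : nat) == (j + u)%N) = false by [].
by apply/negbTE/eqP => ee; have := ltn_ord i; lia.
Qed.

End Mat.

Ltac bsplit := repeat (apply/andP; split); try done; try lia.

Section Main.
Variable k : fieldType.
Variable m : nat.

Lemma ups_cat w1 w2 : ups (w1 ++ w2) = (ups w1 + ups w2)%N.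
Proof. by rewrite /ups count_cat. Qed.

Lemma qpath_FQ a b w : qpath m a b w -> FQ k a b w = Mshift k b a (ups w).
Proof. by move=> /andP[_ /eqP E]; apply: FQ_eq. Qed.

Lemma qpath_le a b w : qpath m a b w -> (b <= a + ups w)%N.
Proof. by move=> /andP[_ /eqP <-]; apply: qend_le. Qed.

Lemma Fform_entry a b (x : seq (k * seq bool)) i j :
  Fform a b x i j = \sum_(c <- x) c.1 * FQ k a b c.2 i j.
Proof. by rewrite /Fform summxE; apply: eq_bigr => c _; rewrite mxE. Qed.

Lemma ideal_F0 a b (y : seq (k * seq bool * option nat * seq bool)) i j :
  all (fun u => let: (t, q, i, p) := u in
           [&& rel_ok m i, qpath m a (relv i) q & qpath m (relv i) b p]) y ->
  \sum_(c <- ideal_expand y) c.1 * FQ k a b c.2 i j = 0.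
Proof.
elim: y => [|[[[t q] i0] p] y IH] /=; first by rewrite big_nil.
move=> /andP[/and3P[hr hq hp] hy].
rewrite ideal_expand_cons big_cat /= IH // addr0.
have hv : (1 <= relv i0)%N by case: i0 {hr hq hp} => //.
have hqv : qvalid m (relv i0) p by case/andP: hp.
have hb := qvalid_bound hqv.
have Hw : forall s, qvalid m (relv i0) s -> qend (relv i0) s = relv i0 ->
    FQ k a b (q ++ s ++ p) = Mshift k b a (ups (q ++ s ++ p)).
  move=> s hs es; apply: qpath_FQ.
  apply: (qpath_cat hq); apply: (qpath_cat (_ : qpath m (relv i0) (relv i0) s) hp).
  by rewrite /qpath hs es eqxx.
case: i0 hr hq hp hv hqv hb Hw => [r|] hr hq hp hv hqv hb Hw /=.
  rewrite !big_cons big_nil /= addr0.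
  have vr : (2 <= relv (Some r) <= m.+1)%N.
    by move: hr hb; rewrite /rel_ok /relv => /andP[h1 h2] /andP[h3 h4]; apply/andP; split; lia.
  move: vr => /andP[v1 v2]; rewrite /relv in v1 v2.
  have e1 : FQ k a b (q ++ [:: true, false & p]) = Mshift k b a (ups (q ++ [:: true, false & p])).
    apply: (Hw [:: true; false]) => //=.
    by bsplit.
  have e2 : FQ k a b (q ++ [:: false, true & p]) = Mshift k b a (ups (q ++ [:: false, true & p])).
    apply: (Hw [:: false; true]) => //=.
    by bsplit.
  rewrite e1 e2 !ups_cat /ups /=.
  by rewrite mulr1 mulrN1 mulNr addrN.
rewrite !big_cons big_nil /= addr0.
have e1 : FQ k a b (q ++ [:: true, false & p]) = Mshift k b a (ups (q ++ [:: true, false & p])).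
  apply: (Hw [:: true; false]) => //=.
rewrite e1 Mshift0 ?mxE ?mulr0 //.
have := qend_eq hqv; move: hp => /andP[_ /eqP ->] /=.
rewrite !ups_cat /ups /=; lia.
Qed.

Lemma ideal_Fform a b (x : seq (k * seq bool)) : in_ideal m a b x -> Fform a b x = 0.
Proof.
move=> [y [Hy C]]; apply/matrixP => i j.
rewrite Fform_entry mxE (sumq_eq (fun w => FQ k a b w i j) C).
exact: ideal_F0.
Qed.

End Main.

Section Hard.
Variable k : fieldType.
Variable m : nat.

Definition canonU a b U := nseq (a + U - b) false ++ nseq U true.

Lemma ups_canonU a b U : ups (canonU a b U) = U.
Proof. by rewrite /canonU ups_cat /ups !count_nseq /= mul0n mul1n. Qed.

Lemma Fform_ideal a b (x : seq (k * seq bool)) : (1 <= a)%N -> kQelt m a b x ->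
  Fform a b x = 0 -> in_ideal m a b x.
Proof.
move=> ha hx F0.
pose alive (c : k * seq bool) := (downs c.2 < a)%N.
pose part (c : k * seq bool) : seq (k * seq bool) :=
  if alive c then [:: (c.1, c.2); (- c.1, canon c.2)] else [:: (c.1, c.2)].
pose rem (c : k * seq bool) : seq (k * seq bool) :=
  if alive c then [:: (c.1, canon c.2)] else [::].
have Hp : in_ideal m a b (flatten [seq part c | c <- x]).
  elim: x hx {F0} => [|c x IH] /=; first by move=> _; exact: ideal_nil.
  move=> /andP[hc hx]; apply: ideal_cat; last exact: IH.
  move: hc => /andP[hv /eqP hb].
  have := NF k hv; rewrite hb /part /alive.
  case: ifP => _ h.
    have := ideal_scale c.1 h; by rewrite /= mulr1 mulrN1.
  have := ideal_scale c.1 h; by rewrite /= mulr1.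
have H3 : forall w, qcoef x w = qcoef (flatten [seq part c | c <- x]) w +
    qcoef (flatten [seq rem c | c <- x]) w.
  move=> w.
  have Pc : forall c, qcoef (part c) w + qcoef (rem c) w = (if c.2 == w then c.1 else 0).
    move=> c; rewrite /part /rem; case: (alive c); rewrite !qcoef_cons !qcoef_nil /=.
      by case: (canon c.2 == w); case: (c.2 == w); rewrite /=; ring.
    ring.
  elim: x {hx F0 Hp} => [|c x IH] /=; first by rewrite !qcoef_nil addr0.
  by rewrite !qcoef_cat (qcoef_cons c x w) IH addrACA Pc.
have H4 : forall w, qcoef (flatten [seq rem c | c <- x]) w = 0.
  move=> w.
  have -> : qcoef (flatten [seq rem c | c <- x]) w =
      \sum_(c <- x) c.1 * (alive c && (canon c.2 == w))%:R.
    elim: x {hx F0 Hp H3} => [|c x IH] /=; first by rewrite qcoef_nil big_nil.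
    rewrite qcoef_cat big_cons IH /rem; congr (_ + _).
    case: ifP => _ /=; last by rewrite qcoef_nil mulr0.
    by rewrite qcoef_cons qcoef_nil addr0; case: ifP; rewrite ?mulr1 ?mulr0.
  have E : {in x, forall c, alive c && (canon c.2 == w) =
      ((ups w < b)%N && (canonU a b (ups w) == w)) && (ups c.2 == ups w)}.
    move=> [t0 w0] cx; have /andP[hv /eqP hb] := allP hx _ cx.
    rewrite /= in hv hb; have he := qend_eq hv; rewrite hb in he.
    have hc : canon w0 = canonU a b (ups w0).
      by rewrite /canon /canonU; congr (nseq _ _ ++ _); lia.
    rewrite /alive /= hc.
    case: (eqVneq (ups w0) (ups w)) => [e|ne].
      rewrite e andbT; congr (_ && _); apply/idP/idP => ?; lia.
    rewrite andbF; apply/negbTE; apply/negP => /andP[_ /eqP ew].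
    by move: ne; rewrite -ew ups_canonU eqxx.
  rewrite (eq_big_seq (fun c => c.1 * (((ups w < b)%N && (canonU a b (ups w) == w))
     && (ups c.2 == ups w))%:R)); last by move=> c cx /=; rewrite E.
  case hc: ((ups w < b)%N && (canonU a b (ups w) == w)); last first.
    by rewrite big1 // => c _; rewrite /= mulr0.
  move: hc => /andP[hub _].
  have := congr1 (fun M : 'M_(b, a) => M (Ordinal hub) (Ordinal ha)) F0.
  rewrite /= Fform_entry mxE => e0; apply: (etrans _ e0).
  apply: eq_big_seq => c cx /=.
  have hcp := allP hx c cx.
  by rewrite (@qpath_FQ k m a b _ hcp) mxE add0n eq_sym.
apply: (ideal_ext _ Hp) => w; by rewrite H3 H4 addr0.
Qed.

End Hard.

Section Toep.
Variable k : fieldType.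

Lemma toeplitz a' b' (F : 'M[k]_(b'.+1, a'.+1)) : F *m Jnil k a'.+1 = Jnil k b'.+1 *m F ->
  forall (i : 'I_b'.+1) (j : 'I_a'.+1),
  F i j = \sum_(u : 'I_b'.+1 | (b'.+1 - a'.+1 <= u)%N) F u 0 * ((i:nat) == (j + u)%N)%:R.
Proof.
move=> FJ.
pose Fn (i j : nat) := F (inord i) (inord j).
have entry : forall i j, (i < b'.+1)%N -> (j < a'.+1)%N ->
   \sum_(l < a'.+1) F (inord i) l * ((l : nat) == j.+1)%:R =
   \sum_(l < b'.+1) F l (inord j) * ((i : nat) == l.+1)%:R.
  move=> i j hi hj.
  have := congr1 (fun M : 'M_(b'.+1, a'.+1) => M (inord i) (inord j)) FJ.
  rewrite /= !mxE => e.
  rewrite (eq_bigr (fun l => F (inord i) l * (Jnil k a'.+1) l (inord j))); last first.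
    by move=> l _; rewrite mxE inordK.
  by rewrite e; apply: eq_bigr => l _; rewrite !mxE inordK // mulrC.
have Rel : forall i j, (i < b'.+1)%N -> (j.+1 < a'.+1)%N ->
    Fn i j.+1 = (if i is i'.+1 then Fn i' j else 0).
  move=> i j hi hj; have := entry i j hi (ltnW hj).
  rewrite (sum_delta (fun l => F (inord i) l) hj).
  have -> : Ordinal hj = inord j.+1 by apply: val_inj; rewrite /= inordK.
  rewrite /Fn => ->; case: i hi => [|i] hi.
    by rewrite big1 // => l _; rewrite mulr0.
  rewrite (eq_bigr (fun l => F l (inord j) * ((l : nat) == i)%:R)); last first.
    by move=> l _; rewrite eqSS eq_sym.
  rewrite (sum_delta (fun l => F l (inord j)) (ltnW hi)).
  by congr (F _ _); apply: val_inj; rewrite /= inordK // ltnW.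
have Rel2 : forall i, (i.+1 < b'.+1)%N -> Fn i a' = 0.
  move=> i hi; have := entry i.+1 a' hi (ltnSn _).
  rewrite (sum_delta0 (fun l => F (inord i.+1) l)) //.
  rewrite (eq_bigr (fun l => F l (inord a') * ((l : nat) == i)%:R)); last first.
    by move=> l _; rewrite eqSS eq_sym.
  rewrite (sum_delta (fun l => F l (inord a')) (ltnW hi)) => e.
  rewrite /Fn; apply: (etrans _ (esym e)); congr (F _ _); apply: val_inj; by rewrite /= inordK // ltnW.
have T1 : forall j i, (i < b'.+1)%N -> (j < a'.+1)%N ->
    Fn i j = if (j <= i)%N then Fn (i - j)%N 0 else 0.
  elim=> [|j IH] i hi hj; first by rewrite subn0.
  rewrite Rel //; case: i hi => [|i] hi //.
  by rewrite IH ?ltnS // 1?ltnW // subSS.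
have T2 : forall u, (u < b'.+1 - a'.+1)%N -> Fn u 0 = 0.
  move=> u hu; have := T1 a' (u + a')%N ltac:(lia) (ltnSn _).
  rewrite leq_addl addnK => <-; apply: Rel2; lia.
move=> i j.
rewrite big_mkcond /=.
rewrite (eq_bigr (fun u : 'I_b'.+1 => Fn u 0 * ((i:nat) == (j + u)%N)%:R)); last first.
  have i0 : inord 0 = (0 : 'I_a'.+1) by apply: val_inj; rewrite /= inordK.
  move=> u _; case: ifP => hu; first by rewrite /Fn inord_val i0.
  rewrite T2 ?mul0r //; lia.
have -> : F i j = Fn i j by rewrite /Fn !inord_val.
rewrite T1 //; case: leqP => hji.
  rewrite (eq_bigr (fun u : 'I_b'.+1 => Fn u 0 * ((u : nat) == (i - j)%N)%:R)); last first.
    move=> u _; congr (_ * _%:R).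
    by case: eqP => e1; case: eqP => e2 //; exfalso; lia.
  have hij : (i - j < b'.+1)%N by have := ltn_ord i; lia.
  by rewrite (sum_delta (fun u : 'I_b'.+1 => Fn u 0) hij).
rewrite big1 // => u _.
suff -> : ((i : nat) == (j + u)%N) = false by rewrite mulr0.
by apply/negbTE/eqP => e; lia.
Qed.

End Toep.

Lemma full_F (k : fieldType) n g (lam : k) m a' b' :
  (1 <= n)%N -> (1 <= g <= n)%N -> (a'.+1 <= m.+2)%N -> (b'.+1 <= m.+2)%N ->
  forall f : forall v : 'I_n.+1, 'M[k]_(b'.+1, a'.+1),
  is_rep_hom (Vrep n g lam a'.+1) (Vrep n g lam b'.+1) f ->
  exists x, kQelt m a'.+1 b'.+1 x /\ forall v, f v = Fform a'.+1 b'.+1 x.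
Proof.
move=> hn /andP[g1 gn] ha hb f hf.
have step : forall x : 'I_n.+1, (x : nat) != g.-1 -> f x = f (ordS x).
  move=> x hx; have := hf x; rewrite /Vrep /= (negbTE hx) mulmx1 mul1mx /Ksrc /Ktgt.
  by case: ifP => _ e; rewrite e.
pose o j : 'I_n.+1 := inord ((g + j) %% n.+1).
have vo : forall j, (o j : nat) = ((g + j) %% n.+1)%N.
  by move=> j; rewrite /o /= inordK // ltn_pmod.
have oS : forall j, ordS (o j) = o j.+1.
  move=> j; apply: val_inj; rewrite /= !vo.
  by rewrite -addn1 modnDml addn1 addnS.
have oneq : forall j, (j < n)%N -> (o j : nat) != g.-1.
  move=> j hj; rewrite vo; case: (ltnP (g + j) n.+1) => h.
    rewrite modn_small //; apply/eqP; lia.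
  have -> : (g + j = (g + j - n.+1) + n.+1)%N by lia.
  rewrite modnDr modn_small; last lia.
  apply/eqP; lia.
have oc : forall j, (j <= n)%N -> f (o j) = f (o 0%N).
  elim=> // j IH hj; rewrite -oS -step ?IH //; [lia | apply: oneq; lia].
have allv : forall v, f v = f (o 0%N).
  move=> v; have hv := ltn_ord v; case: (leqP g v) => h.
    have -> : v = o (v - g)%N.
      by apply: val_inj; rewrite /= vo subnKC // modn_small.
    apply: oc; lia.
  have -> : v = o (v + n.+1 - g)%N.
    apply: val_inj; rewrite /= vo.
    have -> : (g + (v + n.+1 - g) = v + n.+1)%N by lia.
    by rewrite modnDr modn_small.
  apply: oc; lia.
set F := f (o 0%N).
have FJ : F *m Jnil k a'.+1 = Jnil k b'.+1 *m F.
  pose xg : 'I_n.+1 := inord g.-1.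
  have vx : (xg : nat) = g.-1 by rewrite /xg inordK //; lia.
  have := hf xg; rewrite /Vrep /= vx eqxx /Ksrc /Ktgt vx.
  have -> : (g.-1 < g)%N by lia.
  rewrite !allv -/F mulmxDr mulmxDl mul_mx_scalar mul_scalar_mx.
  by move/addrI.
have canP : forall u : 'I_b'.+1, (b'.+1 - a'.+1 <= u)%N ->
    qpath m a'.+1 b'.+1 (canonU a'.+1 b'.+1 u).
  move=> u hu; have := ltn_ord u => hu'.
  rewrite /qpath /canonU qvalid_cat qend_cat qend_downF qend_upT.
  rewrite qvalid_downF; [|lia|lia].
  rewrite qvalid_upT; [|lia|lia].
  by apply/eqP; lia.
exists [seq (F u 0, canonU a'.+1 b'.+1 u) | u <- enum [pred u : 'I_b'.+1 | (b'.+1 - a'.+1 <= u)%N]].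
split.
  rewrite /kQelt all_map; apply/allP => u; rewrite mem_enum inE => hu /=.
  exact: canP.
move=> v; rewrite allv -/F; apply/matrixP => i j.
rewrite (toeplitz FJ i j) Fform_entry big_map big_enum /=.
apply: eq_big => [u|u hu] /=; first by rewrite inE.
by rewrite (@qpath_FQ k m _ _ _ (canP u hu)) mxE ups_canonU.
Qed.

Unset Implicit Arguments.

Theorem mainTheorem4 (k : closedFieldType) (n g : nat) (lam : k) (m : nat) :
  (1 <= n)%N -> (1 <= g <= n)%N -> lam != 0 ->
  forall a b : nat, (1 <= a <= m.+2)%N -> (1 <= b <= m.+2)%N ->
  [/\ (* F_lam is well defined: it lands in Hom_{rep K}(V_a, V_b) *)
      forall w : seq bool, qpath m a b w ->
        is_rep_hom (Vrep n g lam a) (Vrep n g lam b) (fun _ => FQ k a b w),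
      (* its kernel is exactly the ideal generated by (1),(2) *)
      forall x : seq (k * seq bool), kQelt m a b x ->
        (Fform a b x = 0 <-> in_ideal m a b x)
    & (* it is full *)
      forall f : forall v : 'I_n.+1, 'M[k]_(b, a),
        is_rep_hom (Vrep n g lam a) (Vrep n g lam b) f ->
        exists x : seq (k * seq bool),
          kQelt m a b x /\ forall v : 'I_n.+1, f v = Fform a b x].
Proof.
move=> hn hg hlam a b ha hb; split.
- move=> w hw x; rewrite /= (@qpath_FQ k m a b w hw) /Vrep /=.
  case: ifP => _; last by rewrite mulmx1 mul1mx.
  rewrite mulmxDr mulmxDl mul_mx_scalar mul_scalar_mx Mshift_J //.
  exact: (qpath_le hw).
- move=> x hx; split; last exact: ideal_Fform.
  by apply: Fform_ideal => //; case/andP: ha.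
- move=> f hf.
  case: a ha f hf => [|a'] ha //; case: b hb => [|b'] hb // f hf.
  apply: (full_F hn hg _ _ hf); [by case/andP: ha | by case/andP: hb].
Qed.
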